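(* Let $G$ be a finite connected graph with at least one edge and $\Delta$ a decision tree for $G$. Then the set of subsets of $E(G)$ is the disjoint union of subgraph intervals indexed by the spanning trees: $$2^{E(G)}=\bigsqcup_{T\text{ spanning tree of }G}\bigl[T\setminus\mathcal J(T),\ T\cup\mathcal E(T)\bigr],$$ where $\mathcal J(T)$ and $\mathcal E(T)$ are the sets of $\Delta$-active edges of $T$ belonging to $T$ and not belonging to $T$ respectively.
   Context: Graphs may have loops and multiple edges; spanning subgraphs are identified with edge subsets, and for $A\subseteq B\subseteq E(G)$ the interval $[A,B]$ is $\{S:A\subseteq S\subseteq B\}$. An isthmus is an edge whose deletion increases the number of components; an edge is standard if neither a loop nor an isthmus. Let $m=|E(G)|$. A decision tree is a perfect binary tree of depth $m-1$ whose nodes are labelled by edges of $G$ so that along every root-to-leaf path the labels form a permutation of $E(G)$. Given $S\subseteq E(G)$, run: $H:=G$, $n:=$ root; for $k=1,\dots,m$: let $e$ be the label of $n$; if $e$ is a loop of $H$: type L, delete $e$, go to left child; if $e$ is an isthmus of $H$: type I, contract $e$, go to right child; if $e$ is standard and $e\notin S$: type $S_e$, delete, go left; if standard and $e\in S$: type $S_i$, contract, go right. An edge is $\Delta$-active for $S$ if its type is L or I. *)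

(* Defs.v *)
(* Multigraphs (loops and multiple edges allowed) on a fixed
   vertex type V and edge type E; a graph is a vertex subset, an edge subset
   and an endpoint map. *)
From mathcomp Require Import all_boot.

Set Implicit Arguments.
Unset Strict Implicit.
Unset Printing Implicit Defensive.

Section Graphs.
Variables (V E : finType).

Record mgraph := MG { gv : {set V}; ge : {set E}; gends : E -> V * V }.

Definition joins (H : mgraph) (e : E) (x y : V) : bool :=
  (gends H e == (x, y)) || (gends H e == (y, x)).

Definition adj (H : mgraph) : rel V :=
  fun x y => [exists f in ge H, joins H f x y].

Definition ncomp (H : mgraph) : nat :=
  #|[set [set y in gv H | connect (adj H) x y] | x in gv H]|.

Definition delete (H : mgraph) (e : E) : mgraph :=
  MG (gv H) (ge H :\ e) (gends H).

Definition contract (H : mgraph) (e : E) : mgraph :=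
  let u := (gends H e).1 in let v := (gends H e).2 in
  if u == v then delete H e else
  MG (gv H :\ v) (ge H :\ e)
     (fun f => let w := gends H f in
               (if w.1 == v then u else w.1, if w.2 == v then u else w.2)).

Definition is_loop (H : mgraph) (e : E) : bool :=
  (e \in ge H) && ((gends H e).1 == (gends H e).2).

Definition is_isthmus (H : mgraph) (e : E) : bool :=
  (e \in ge H) && (ncomp H < ncomp (delete H e)).

Inductive etype := TL | TI | TSe | TSi.

Definition goes_right (t : etype) : bool :=
  match t with TI | TSi => true | _ => false end.

Definition is_active_type (t : etype) : bool :=
  match t with TL | TI => true | _ => false end.

Definition classify (H : mgraph) (S : {set E}) (e : E) : etype :=
  if is_loop H e then TL
  else if is_isthmus H e then TI
  else if e \notin S then TSe else TSi.

(* A decision tree: a labelling of the nodes of the perfect binary tree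
   (nodes = bit sequences, false = left child, true = right child). *)
Definition is_decision_tree (lab : seq bool -> E) : Prop :=
  forall p : seq bool, size p = #|E|.-1 ->
    perm_eq [seq lab (take i p) | i <- iota 0 #|E|] (enum E).

Fixpoint run (lab : seq bool -> E) (S : {set E}) (k : nat) (H : mgraph)
    (n : seq bool) : seq (E * etype) :=
  match k with
  | 0 => [::]
  | k'.+1 =>
      let e := lab n in
      let t := classify H S e in
      (e, t) :: (if goes_right t
                 then run lab S k' (contract H e) (rcons n true)
                 else run lab S k' (delete H e) (rcons n false))
  end.

Definition active (G : mgraph) (lab : seq bool -> E) (S : {set E}) : {set E} :=
  [set e | has (fun et => (et.1 == e) && is_active_type et.2)
                (run lab S #|E| G [::])].

Definition Jset G lab (T : {set E}) : {set E} := active G lab T :&: T.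
Definition Eset G lab (T : {set E}) : {set E} := active G lab T :\: T.

Definition connected_graph (H : mgraph) : Prop :=
  forall x y : V, connect (adj H) x y.

(* a cycle in the edge set T: edges es = e_1..e_k (distinct, k >= 1),
   vertices v0, vs = v_1..v_k with v_k = v0, v_1..v_k distinct,
   e_i joining v_{i-1} and v_i. *)
Definition is_cycle (ends : E -> V * V) (T : {set E}) (v0 : V)
    (es : seq E) (vs : seq V) : bool :=
  [&& es != [::], size vs == size es, uniq es, all (fun e => e \in T) es,
      last v0 vs == v0, uniq vs &
      all (fun t => joins (MG setT T ends) t.1 t.2.1 t.2.2)
          (zip es (zip (v0 :: vs) vs))].

Definition acyclic (ends : E -> V * V) (T : {set E}) : Prop :=
  forall v0 es vs, ~~ is_cycle ends T v0 es vs.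

Definition spanning_tree (G : mgraph) (T : {set E}) : Prop :=
  T \subset ge G /\ connected_graph (MG (gv G) T (gends G)) /\
  acyclic (gends G) T.

End Graphs.

(* Main.v *)
Require Import Defs.
From HB Require Import structures.
From mathcomp Require Import all_boot.
Set Implicit Arguments. Unset Strict Implicit. Unset Printing Implicit Defensive.

Section Aux.
Variables (V E : finType).
Implicit Types (H : mgraph V E) (A B T : {set E}).

Definition adjA (ends : E -> V * V) A : rel V :=
  fun x y => [exists f in A, (ends f == (x, y)) || (ends f == (y, x))].

Lemma adjA_sym ends A : symmetric (adjA ends A).
Proof.
move=> x y; apply/existsP/existsP => -[f /andP[fA j]]; exists f;
  by rewrite fA orbC.
Qed.

Lemma cs ends A : connect_sym (adjA ends A).
Proof. exact/sym_connect_sym/adjA_sym. Qed.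

Lemma conn_map (g : V -> V) (e e' : rel V) :
  (forall x y, e x y -> connect e' (g x) (g y)) ->
  forall x y, connect e x y -> connect e' (g x) (g y).
Proof.
move=> h x y /connectP [p]; elim: p x => [|z p IH] x /=; first by move=> _ ->.
by move=> /andP[exz pz] ly; apply: connect_trans (h _ _ exz) (IH _ pz ly).
Qed.

Lemma adjA_mono ends A B : A \subset B -> forall x y,
  adjA ends A x y -> adjA ends B x y.
Proof.
move=> sAB x y /existsP[f /andP[fA j]]; apply/existsP; exists f.
by rewrite (subsetP sAB _ fA).
Qed.

Lemma connect_mono ends A B : A \subset B -> forall x y,
  connect (adjA ends A) x y -> connect (adjA ends B) x y.
Proof.
move=> sAB; apply: (conn_map (g:=id)) => x y h; apply: connect1.
exact: adjA_mono h.
Qed.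

Lemma adjA_edge ends A f : f \in A ->
  adjA ends A (ends f).1 (ends f).2.
Proof. by move=> fA; apply/existsP; exists f; rewrite fA -surjective_pairing eqxx. Qed.

Definition conn (P : {set V}) ends A :=
  forall x y, x \in P -> y \in P -> connect (adjA ends A) x y.
Definition forest ends A :=
  forall f, f \in A -> ~~ connect (adjA ends (A :\ f)) (ends f).1 (ends f).2.
Definition span H T :=
  [/\ T \subset ge H, conn (gv H) (gends H) T & forest (gends H) T].
Definition Hconn H := conn (gv H) (gends H) (ge H).
Definition Inv H := forall f, f \in ge H ->
  ((gends H f).1 \in gv H) && ((gends H f).2 \in gv H).

Lemma adjE H : adj H =2 adjA (gends H) (ge H).
Proof. by []. Qed.

End Aux.

Section Contr.
Variables (V E : finType).
Implicit Types (H : mgraph V E) (A B T : {set E}).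

Definition phi H e x := if x == (gends H e).2 then (gends H e).1 else x.

Lemma ge_contract H e : ge (contract H e) = ge H :\ e.
Proof. by rewrite /contract; case: ifP. Qed.
Lemma ge_delete H e : ge (delete H e) = ge H :\ e.
Proof. by []. Qed.

Section NL.
Variables (H : mgraph V E) (e : E).
Hypothesis nl : (gends H e).1 != (gends H e).2.
Let u := (gends H e).1.
Let v := (gends H e).2.

Lemma gv_contract : gv (contract H e) = gv H :\ v.
Proof. by rewrite /contract (negbTE nl). Qed.
Lemma gends_contract f :
  gends (contract H e) f = (phi H e (gends H f).1, phi H e (gends H f).2).
Proof. by rewrite /contract (negbTE nl). Qed.

Lemma phi_u : phi H e u = u.
Proof. by rewrite /phi (negbTE nl). Qed.
Lemma phi_v : phi H e v = u.
Proof. by rewrite /phi eqxx. Qed.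

Lemma phi_conn A a : e \in A -> connect (adjA (gends H) A) a (phi H e a).
Proof.
move=> eA; rewrite /phi; case: eqP => [->|_]; last exact: connect0.
rewrite cs; exact/connect1/adjA_edge.
Qed.

Lemma L1 A x y : adjA (gends (contract H e)) A x y ->
  connect (adjA (gends H) (e |: A)) x y.
Proof.
case/existsP => f /andP[fA]; rewrite gends_contract.
have eA : e \in e |: A by rewrite setU11.
have fA' : f \in e |: A by rewrite setU1r.
have ab := connect1 (adjA_edge (gends H) fA').
have ea := phi_conn (gends H f).1 eA; have eb := phi_conn (gends H f).2 eA.
rewrite cs in ea.
case/orP => /eqP [<- <-].
  exact: connect_trans (connect_trans ea ab) eb.
rewrite cs in ab; rewrite cs in eb.
exact: connect_trans (connect_trans eb ab) (phi_conn _ eA).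
Qed.

Lemma L1c A x y : connect (adjA (gends (contract H e)) A) x y ->
  connect (adjA (gends H) (e |: A)) x y.
Proof. move=> h; have := conn_map (g:=id) (@L1 A) h; exact. Qed.

Lemma L2 A x y : adjA (gends H) A x y ->
  connect (adjA (gends (contract H e)) (A :\ e)) (phi H e x) (phi H e y).
Proof.
case/existsP => f /andP[fA j]; have [fe|nfe] := eqVneq f e.
  subst f; apply: eq_connect0.
  by case/orP: j => /eqP ee; rewrite (surjective_pairing (gends H e)) in ee;
    case: ee => <- <-; rewrite phi_u phi_v.
apply/connect1/existsP; exists f; rewrite !inE nfe fA /= gends_contract.
by case/orP: j => /eqP -> /=; rewrite eqxx ?orbT.
Qed.

Lemma L2c A x y : connect (adjA (gends H) A) x y ->
  connect (adjA (gends (contract H e)) (A :\ e)) (phi H e x) (phi H e y).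
Proof. move=> h; exact: (conn_map (@L2 A) h). Qed.

Lemma phi_id x : x != v -> phi H e x = x.
Proof. by rewrite /phi => /negbTE ->. Qed.

Lemma conn_contract A : conn (gv H) (gends H) A ->
  conn (gv (contract H e)) (gends (contract H e)) (A :\ e).
Proof.
move=> c x y; rewrite gv_contract !inE => /andP[xv xH] /andP[yv yH].
by rewrite -(phi_id xv) -(phi_id yv); apply: L2c; apply: c.
Qed.

Lemma Inv_contract : e \in ge H -> Inv H -> Inv (contract H e).
Proof.
move=> eH iH f; rewrite ge_contract gends_contract gv_contract => /setD1P[_ fH].
have := iH f fH; have := iH e eH; rewrite -/u -/v => /andP[uH _] /andP[aH bH] /=.
rewrite !inE /phi.
case: ifP => [_|/negbT ->]; rewrite ?nl ?uH ?aH //=;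
case: ifP => [_|/negbT ->]; rewrite ?nl ?uH ?bH //.
Qed.

End NL.

End Contr.

Section Span.
Variables (V E : finType).
Implicit Types (H : mgraph V E) (A B T : {set E}).

Lemma span_contract H e T : (gends H e).1 != (gends H e).2 ->
  e \in T -> span H T -> span (contract H e) (T :\ e).
Proof.
move=> nl eT [sT cT fT]; split.
- by rewrite ge_contract; apply: setSD.
- exact: conn_contract.
move=> f; rewrite !inE => /andP[nfe fT1]; apply/negP => c.
have := L1c nl c; rewrite gends_contract //=.
have eTf : e \in T :\ f by rewrite !inE eq_sym nfe.
have -> : e |: (T :\ e :\ f) = T :\ f.
  apply/setP => z; rewrite !inE; case: eqP => [->|//]; by rewrite eq_sym nfe.
move=> c3; apply/negP: (fT f fT1).
have ea := phi_conn H (gends H f).1 eTf; have eb := phi_conn H (gends H f).2 eTf.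
rewrite cs in eb.
by rewrite negbK (connect_trans (connect_trans ea c3) eb).
Qed.

Lemma adj_restrict (ends : E -> V * V) A g u x y : ((ends g).1 == u) || ((ends g).2 == u) ->
  x != u -> y != u -> adjA ends A x y -> adjA ends (A :\ g) x y.
Proof.
move=> gu xu yu /existsP[f /andP[fA j]]; apply/existsP; exists f.
rewrite !inE fA j !andbT; apply/eqP => fg; subst f.
by move: gu; case/orP: j => /eqP -> /=; rewrite (negbTE xu) (negbTE yu).
Qed.

Lemma phi_gv H e x : Inv H -> e \in ge H -> (gends H e).1 != (gends H e).2 ->
  x \in gv H -> phi H e x \in gv (contract H e).
Proof.
move=> iH eH nl xH; rewrite gv_contract // !inE /phi.
case: ifP => [_|/negbT -> //]; rewrite nl /=.
by case/andP: (iH e eH).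
Qed.

Lemma span_uncontract H e T : Inv H -> e \in ge H ->
  (gends H e).1 != (gends H e).2 ->
  span (contract H e) T -> span H (e |: T).
Proof.
move=> iH eH nl [sT cT fT].
rewrite ge_contract in sT.
have eT : e \notin T by apply/negP => /(subsetP sT); rewrite !inE eqxx.
have sTH : T \subset ge H by apply: subset_trans sT (subD1set _ _).
have ee : e \in e |: T by rewrite setU11.
split.
- by rewrite subUset sub1set eH sTH.
- move=> x y xH yH.
  have c1 := L1c nl (cT _ _ (phi_gv iH eH nl xH) (phi_gv iH eH nl yH)).
  have ex := phi_conn H x ee; have ey := phi_conn H y ee.
  rewrite cs in ey; exact: connect_trans (connect_trans ex c1) ey.
move=> f; rewrite !inE; have [fe _|nfe /= fT1] := eqVneq f e.
  subst f; apply/negP => c.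
  have EE : (e |: T) :\ e = T.
    apply/setP => z; rewrite !inE; case: eqP => // ->; exact/esym/negbTE.
  rewrite EE in c.
  case/connectP: c => p pp lp.
  move: lp; case: (shortenP pp) => p' pp' up' _ lp'.
  case: p' pp' up' lp' => [/= _ _ lp'|p1 q /= /andP[a1 pq] /andP[up1 uq] lq].
    by move: nl; rewrite lp' eqxx.
  case/existsP: a1 => g /andP[gT jg].
  have gu : ((gends H g).1 == (gends H e).1) || ((gends H g).2 == (gends H e).1).
    by case/orP: jg => /eqP ->; rewrite eqxx ?orbT.
  have pq' : path (adjA (gends H) (T :\ g)) p1 q.
    apply: (sub_in_path (P := predC1 (gends H e).1)) pq.
      move=> x y /= xu yu; exact: adj_restrict gu xu yu.
    by apply/allP => z zin /=; apply/eqP => zu; rewrite -zu zin in up1.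
  have c1 : connect (adjA (gends H) (T :\ g)) p1 (gends H e).2.
    by apply/connectP; exists q.
  have c2 := connect_mono (subD1set _ e) (L2c nl c1).
  rewrite phi_v in c2.
  apply/negP: (fT g gT); rewrite negbK gends_contract //=.
  by case/orP: jg => /eqP -> /=; rewrite (phi_u nl) // cs.
apply/negP => c; have c2 := L2c nl c.
have sub : (e |: T) :\ f :\ e \subset T :\ f.
  apply/subsetP => z; rewrite !inE; case: eqP => // _; case: eqP => //.
apply/negP: (fT f fT1); rewrite negbK gends_contract //=.
exact: connect_mono sub _ _ c2.
Qed.
End Span.

Section Del.
Variables (V E : finType).
Implicit Types (H : mgraph V E) (A B T : {set E}).

Lemma span_undelete H e T : span (delete H e) T -> span H T.
Proof.
case=> sT cT fT; split => //; apply: subset_trans sT _; exact: subD1set.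
Qed.

Lemma span_delete H e T : e \notin T -> span H T -> span (delete H e) T.
Proof.
move=> eT [sT cT fT]; split => //=; apply/subsetP => z zT; rewrite !inE.
by rewrite (subsetP sT _ zT) andbT; apply: contraNneq eT => <-.
Qed.

Lemma Inv_delete H e : Inv H -> Inv (delete H e).
Proof. by move=> iH f /setD1P[_ /iH]. Qed.

Lemma Hconn_loop H e : is_loop H e -> Hconn H -> Hconn (delete H e).
Proof.
case/andP => eH /eqP uv c x y xH yH; have := c x y xH yH.
apply: (connect_sub _) => a b /existsP[f /andP[fH j]].
have [fe|nfe] := eqVneq f e.
  subst f; apply: eq_connect0; move: j; rewrite (surjective_pairing (gends H e)) uv.
  by case/orP => /eqP [<- <-].
by apply/connect1/existsP; exists f; rewrite /= !inE nfe fH.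
Qed.

Lemma Hconn_contract H e : (gends H e).1 != (gends H e).2 ->
  Hconn H -> Hconn (contract H e).
Proof. by move=> nl c; rewrite /Hconn ge_contract; exact: conn_contract. Qed.

Definition cls H x := [set y in gv H | connect (adj H) x y].

Lemma ncomp_le1 H : Hconn H -> ncomp H <= 1.
Proof.
move=> c; apply/card_le1_eqP => X Y /imsetP[x xH ->] /imsetP[y yH ->].
apply/setP => z; rewrite !inE; case zH: (z \in gv H) => //=.
have xy : connect (adjA (gends H) (ge H)) x y := c x y xH yH.
have yx : connect (adjA (gends H) (ge H)) y x := c y x yH xH.
apply/idP/idP => h.
  exact: connect_trans xy h.
exact: connect_trans yx h.
Qed.

Lemma le1_Hconn H : ncomp H <= 1 -> Hconn H.
Proof.
move/card_le1_eqP => h x y xH yH.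
have := h _ _ (imset_f (fun x => [set y in gv H | connect (adj H) x y]) xH)
              (imset_f (fun x => [set y in gv H | connect (adj H) x y]) yH).
move/setP/(_ y); rewrite !inE yH connect0 /= => E1.
by rewrite -E1.
Qed.

Lemma ncomp_gt0 H x : x \in gv H -> 0 < ncomp H.
Proof. by move=> xH; apply/card_gt0P; exists [set y in gv H | connect (adj H) x y]; apply: imset_f. Qed.

Lemma ncomp0 H : gv H = set0 -> ncomp H = 0.
Proof. by move=> h; rewrite /ncomp h imset0 cards0. Qed.

Lemma Hconn_delete H e : ~~ is_isthmus H e -> e \in ge H -> Hconn H ->
  Hconn (delete H e).
Proof.
rewrite /is_isthmus => + eH c; rewrite eH /= -leqNgt => le.
by apply: le1_Hconn; apply: leq_trans le (ncomp_le1 c).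
Qed.

Lemma isthmus_in H e T : span H T -> is_isthmus H e -> e \in T.
Proof.
case=> sT cT fT /andP[eH lt]; apply/negPn/negP => eT.
have c : Hconn (delete H e).
  move=> x y xH yH; apply: connect_mono (cT x y xH yH).
  apply/subsetP => z zT; rewrite /= !inE (subsetP sT _ zT) andbT.
  by apply: contraNneq eT => <-.
have := ncomp_le1 c; have [g0|[x xH]] := set_0Vmem (gv H).
  by move: lt; rewrite !ncomp0.
by move: lt (ncomp_gt0 xH); case: (ncomp H) => // n; case: (ncomp (delete H e)) => // [[|m]].
Qed.

Lemma loop_notin H e T : span H T -> is_loop H e -> e \notin T.
Proof.
case=> _ _ fT /andP[_ /eqP uv]; apply/negP => eT.
by have := fT e eT; rewrite uv connect0.
Qed.

End Del.

Definition etype_eqb (a b : etype) :=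
  match a, b with TL, TL | TI, TI | TSe, TSe | TSi, TSi => true | _, _ => false end.
Lemma etype_eqP : Equality.axiom etype_eqb.
Proof. by case; case; constructor. Qed.
HB.instance Definition _ := hasDecEq.Build etype etype_eqP.

Section Run.
Variables (V E : finType) (lab : seq bool -> E).
Implicit Types (H : mgraph V E) (A B S T : {set E}).

Definition rset (r : seq (E * etype)) : {set E} :=
  [set e | has (fun et => (et.1 == e) && goes_right et.2) r].

Lemma rset_nil : rset [::] = set0.
Proof. by apply/setP => z; rewrite !inE. Qed.

Lemma rset_cons e t r :
  rset ((e, t) :: r) = if goes_right t then e |: rset r else rset r.
Proof.
apply/setP => z; rewrite !inE /=; case: (goes_right t); rewrite ?andbT ?andbF //.
  by rewrite !inE eq_sym. by rewrite inE.
Qed.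

Lemma ge_next H e l : e \notin l -> ge H = [set x in e :: l] ->
  ge H :\ e = [set x in l].
Proof.
move=> el gH; apply/setP => z; rewrite gH !inE.
by case: eqP => // ->; rewrite (negbTE el).
Qed.

Lemma nl_of H e : e \in ge H -> is_loop H e = false ->
  (gends H e).1 != (gends H e).2.
Proof. by rewrite /is_loop => -> /= /negbT. Qed.

Lemma runA S k : forall H n, let r := run lab S k H n in
  uniq (map fst r) -> ge H = [set x in map fst r] -> Inv H -> Hconn H ->
  span H (rset r).
Proof.
elim: k => [|k IH] H n /=.
  move=> _ gH _ c; rewrite rset_nil.
  have g0 : ge H = set0 by rewrite gH; apply/setP => z; rewrite !inE.
  split; first exact: sub0set.
    by move=> x y xH yH; have := c x y xH yH; rewrite g0.
  by move=> f; rewrite inE.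
move=> /andP[en u] gH iH cH.
have eH : lab n \in ge H by rewrite gH !inE eqxx.
have gH' := ge_next en gH.
move: u gH'; rewrite rset_cons /classify.
case L: (is_loop H (lab n)) => /= u gH'.
  apply: (span_undelete (e := lab n)); apply: IH => //.
    exact: Inv_delete.
  exact: Hconn_loop.
have nl := nl_of eH L.
move: u gH'; case I: (is_isthmus H (lab n)) => /= u gH'.
  apply: (span_uncontract (iH) (eH) (nl)).
  apply: IH => //; first by rewrite ge_contract.
    exact: Inv_contract nl eH iH.
  exact: Hconn_contract nl cH.
move: u gH'; case: (lab n \in S) => /= u gH'.
  apply: (span_uncontract (iH) (eH) (nl)).
  apply: IH => //; first by rewrite ge_contract.
    exact: Inv_contract nl eH iH.
  exact: Hconn_contract nl cH.
apply: (span_undelete (e := lab n)); apply: IH => //.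
  exact: Inv_delete.
by apply: Hconn_delete => //; rewrite I.
Qed.

Lemma runB T k : forall H n, let r := run lab T k H n in
  uniq (map fst r) -> ge H = [set x in map fst r] -> span H (T :&: ge H) ->
  rset r = T :&: ge H.
Proof.
elim: k => [|k IH] H n /=.
  move=> _ gH _; rewrite rset_nil.
  have g0 : ge H = set0 by rewrite gH; apply/setP => z; rewrite !inE.
  by rewrite g0 setI0.
move=> /andP[en u] gH sH.
have eH : lab n \in ge H by rewrite gH !inE eqxx.
have gH' := ge_next en gH.
have TD : T :&: (ge H :\ lab n) = (T :&: ge H) :\ lab n by rewrite setIDA.
rewrite rset_cons /classify.
have del : lab n \notin T ->
  let r := run lab T k (delete H (lab n)) (rcons n false) in
  uniq (map fst r) -> ge H :\ lab n = [set x in map fst r] -> rset r = T :&: ge H.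
  move=> eT r u0 g0.
  have TE : T :&: (ge H :\ lab n) = T :&: ge H.
    rewrite TD; apply/setP => z; rewrite !inE; case: eqP => // ->.
    by rewrite (negbTE eT).
  rewrite /r IH //= TE //; apply: span_delete sH; by rewrite inE (negbTE eT).
have con : lab n \in T -> is_loop H (lab n) = false ->
  let r := run lab T k (contract H (lab n)) (rcons n true) in
  uniq (map fst r) -> ge H :\ lab n = [set x in map fst r] ->
  lab n |: rset r = T :&: ge H.
  move=> eT L r u0 g0; have nl := nl_of eH L.
  rewrite /r IH ?ge_contract //.
    by rewrite TD setD1K // inE eT.
  rewrite TD; apply: span_contract => //; by rewrite inE eT.
move: u gH'. rewrite /classify.
case L: (is_loop H (lab n)) => /= u gH'.
  apply: del => //; have := loop_notin sH L; by rewrite inE eH andbT.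
move: u gH'; case I: (is_isthmus H (lab n)) => /= u gH'.
  apply: con => //; have := isthmus_in sH I; by rewrite inE => /andP[].
move: u gH'; case eT: (lab n \in T) => /= u gH'; first exact: con.
by apply: del => //; rewrite eT.
Qed.

Definition std (t : etype) := match t with TSe | TSi => true | _ => false end.

Lemma run_ext S1 S2 k : forall H n,
  (forall et : E * etype, et \in run lab S1 k H n -> std et.2 -> (et.1 \in S1) = (et.1 \in S2)) ->
  run lab S1 k H n = run lab S2 k H n.
Proof.
elim: k => [//|k IH] H n /= h.
have hd : classify H S1 (lab n) = classify H S2 (lab n).
  have := h _ (mem_head _ _); rewrite /classify /=.
  case: (is_loop H (lab n)) => //; case: (is_isthmus H (lab n)) => //.
  by case: (lab n \in S1) => /= <-.
rewrite -hd; move: h; case: (goes_right _) => h; rewrite IH // => et etin; apply: h; by rewrite inE etin orbT.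
Qed.

Lemma run_std S k : forall H n (et : E * etype), et \in run lab S k H n ->
  (et.2 = TSe -> et.1 \notin S) /\ (et.2 = TSi -> et.1 \in S).
Proof.
elim: k => [//|k IH] H n et /=; rewrite inE => /orP[/eqP -> /=|]; last by case: (goes_right _) => /IH.
rewrite /classify; case: (is_loop H (lab n)) => //; case: (is_isthmus H (lab n)) => //.
by case: (lab n \in S).
Qed.

Lemma uniq_fst (r : seq (E * etype)) e t1 t2 : uniq (map fst r) ->
  (e, t1) \in r -> (e, t2) \in r -> t1 = t2.
Proof.
elim: r => [//|[e' t'] r IH] /= /andP[nr ur].
rewrite !in_cons; case: ((e, t1) =P (e', t')) => [[h1 h2]|_] /=;
  case: ((e, t2) =P (e', t')) => [[h3 h4]|_] /=.
- by rewrite h2 h4.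
- subst => _ h; by have /= := map_f fst h; rewrite (negbTE nr).
- subst => h _; by have /= := map_f fst h; rewrite (negbTE nr).
- exact: IH.
Qed.

Lemma run_path S k : forall H n, exists q : seq bool, size q = k /\
  map fst (run lab S k H n) = [seq lab (n ++ take i q) | i <- iota 0 k].
Proof.
elim: k => [|k IH] H n; first by exists [::].
set b := goes_right (classify H S (lab n)).
have [q [sq eq]] := IH (if b then contract H (lab n) else delete H (lab n)) (rcons n b).
exists (b :: q); split; first by rewrite /= sq.
rewrite /= -/b; case: b eq => -> ; rewrite cats0 -(addn0 1) iotaDl -map_comp;
  congr (_ :: _); apply: eq_map => i /=; by rewrite cat_rcons.
Qed.

End Run.

Section Cyc.
Variables (V E : finType) (ends : E -> V * V).
Implicit Types (A T : {set E}).

Definition J (t : E * (V * V)) :=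
  (ends t.1 == (t.2.1, t.2.2)) || (ends t.1 == (t.2.2, t.2.1)).

Lemma walk A es : forall x xs, size xs = size es -> all (fun e => e \in A) es ->
  all J (zip es (zip (x :: xs) xs)) -> connect (adjA ends A) x (last x xs).
Proof.
elim: es => [|e es IH] x [|y xs] //= [s] /andP[eA aA] /andP[j aj].
apply: connect_trans (IH y xs s aA aj).
by apply/connect1/existsP; exists e; rewrite eA.
Qed.

Lemma ends_in gs : forall y p, size p = size gs ->
  all J (zip gs (zip (y :: p) p)) ->
  forall g, g \in gs -> ((ends g).1 \in y :: p) && ((ends g).2 \in y :: p).
Proof.
elim: gs => [//|g gs IH] y [|z p] //= [s] /andP[j aj] h.
rewrite inE => /orP[/eqP ->|hin].
  by case/orP: j => /eqP -> /=; rewrite !inE !eqxx ?orbT.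
case/andP: (IH z p s aj h hin) => h1 h2.
by rewrite inE h1 orbT inE h2 orbT.
Qed.

Lemma edges_of A p : forall x, path (adjA ends A) x p -> uniq (x :: p) ->
  exists gs, [/\ size gs = size p, all (fun e => e \in A) gs, uniq gs &
    all J (zip gs (zip (x :: p) p))].
Proof.
elim: p => [|y p IH] x /=; first by move=> _ _; exists [::].
move=> /andP[/existsP[g /andP[gA jg]] pp] /andP[xn u].
have [gs [s aA ug aj]] := IH y pp u.
exists (g :: gs); split => /=.
- by rewrite s.
- by rewrite gA.
- rewrite ug andbT; apply/negP => gin.
  have := ends_in (esym s) aj gin.
  by case/orP: jg => /eqP -> /= /andP[h1 h2]; move: xn; rewrite ?h1 ?h2.
by rewrite aj andbT.
Qed.

Lemma cycle_forest T v0 es vs : is_cycle ends T v0 es vs -> ~ forest ends T.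
Proof.
rewrite /is_cycle => /and4P[ne /eqP s u /and4P[aT /eqP l uv aj]] f.
case: es ne s u aT aj => [//|e1 es] _; case: vs l uv => [//|v1 vs] /= l _ [s].
move=> /andP[e1n ues] /andP[e1T aT] /andP[j1 aj].
have aT' : all (fun e => e \in T :\ e1) es.
  apply/allP => z zin; rewrite !inE (allP aT _ zin) andbT.
  by apply: contraNneq e1n => <-.
have c := walk s aT' aj; rewrite l in c.
have := f e1 e1T; case/orP: j1 => /= /eqP -> /=; rewrite ?c //.
by rewrite cs c.
Qed.

Lemma forest_of_acyclic T : acyclic ends T -> forest ends T.
Proof.
move=> ac f fT; apply/negP => c.
case ab: (ends f) => [a b]; rewrite ab /= in c.
have [eab|nab] := eqVneq a b.
  subst b; apply/negP: (ac a [:: f] [:: a]).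
  by rewrite /is_cycle /= fT !eqxx /= /joins /= ab eqxx.
case/connectP: c => p pp lp; move: lp; case: (shortenP pp) => p' pp' up' _ lp'.
have [gs [s aA ug aj]] := edges_of pp' up'.
apply/negP: (ac b (f :: gs) (a :: p')).
rewrite /is_cycle /= s eqxx /= fT -lp' eqxx negbK.
have fn : f \notin gs by apply/negP => /(allP aA); rewrite !inE eqxx.
move: up' => /= ->; rewrite fn ug /= /joins /= ab !eqxx orbT /=.
apply/andP; split; last exact: aj.
by apply/allP => z /(allP aA); rewrite !inE => /andP[].
Qed.

End Cyc.

Section Main.
Variables (V E : finType) (lab : seq bool -> E).

Lemma rsetP (r : seq (E * etype)) e :
  reflect (exists t, (e, t) \in r /\ goes_right t) (e \in rset r).
Proof.
rewrite inE; apply: (iffP hasP) => [[[e' t] h /andP[/eqP /= <- g]]|[t [h g]]].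
  by exists t.
by exists (e, t); rewrite //= eqxx.
Qed.

Lemma activeP (G : mgraph V E) S e :
  reflect (exists t, (e, t) \in run lab S #|E| G [::] /\ is_active_type t)
    (e \in active G lab S).
Proof.
rewrite inE; apply: (iffP hasP) => [[[e' t] h /andP[/eqP /= <- g]]|[t [h g]]].
  by exists t.
by exists (e, t); rewrite //= eqxx.
Qed.

Lemma run_perm (G : mgraph V E) S : 0 < #|E| -> is_decision_tree lab ->
  perm_eq (map fst (run lab S #|E| G [::])) (enum E).
Proof.
move=> E0 dt; have [q [sq eq]] := run_path lab S #|E| G [::].
have sp : size (take #|E|.-1 q) = #|E|.-1.
  by rewrite size_take sq prednK // leqnn.
rewrite eq; have := dt _ sp.
have -> // : [seq lab ([::] ++ take i q) | i <- iota 0 #|E|] =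
  [seq lab (take i (take #|E|.-1 q)) | i <- iota 0 #|E|].
apply/eq_in_map => i iin.
move: iin; rewrite mem_iota add0n => /andP[_ lt].
by rewrite take_takel // -ltnS prednK.
Qed.

End Main.

Theorem theorem13p3p1 (V E : finType) (ends : E -> V * V)
    (lab : seq bool -> E) :
  let G := MG [set: V] [set: E] ends in
  connected_graph G -> 0 < #|E| -> is_decision_tree lab ->
  forall S : {set E},
    exists! T : {set E},
      spanning_tree G T /\
      (T :\: Jset G lab T \subset S) /\ (S \subset T :|: Eset G lab T).
Proof.
move=> G cG E0 dt S.
have U S' : uniq (map fst (run lab S' #|E| G [::])).
  by rewrite (perm_uniq (@run_perm V E lab G S' E0 dt)) enum_uniq.
have M S' : ge G = [set x in map fst (run lab S' #|E| G [::])].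
  by apply/setP => x; rewrite !inE (perm_mem (@run_perm V E lab G S' E0 dt)) mem_enum.
have M' S' e : exists t, (e, t) \in run lab S' #|E| G [::].
  have : e \in map fst (run lab S' #|E| G [::]).
    by rewrite (perm_mem (@run_perm V E lab G S' E0 dt)) mem_enum.
  by case/mapP => [[e' t] h /= ->]; exists t.
set T0 := rset (run lab S #|E| G [::]).
have sp : span G T0.
  apply: runA; [exact: U | exact: M | by move=> f _; rewrite !inE | ].
  by move=> x y _ _; apply: cG.
have rS : run lab T0 #|E| G [::] = run lab S #|E| G [::].
  symmetry; apply: run_ext => -[e t] h /= st.
  have [s1 s2] := run_std h.
  case: t st h s1 s2 => //= _ h s1 s2.
    rewrite (negbTE (s1 erefl)); apply/esym/negP => /rsetP [t' [h' g]].
    by have := uniq_fst (U S) h h'; move=> tt; subst t'.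
  rewrite (s2 erefl); apply/esym/rsetP; by exists TSi.
exists T0; split.
  split.
    case: sp => sT cT fT; split => //; split.
      by move=> x y; apply: cT; rewrite inE.
    move=> v0 es vs; apply/negP => c; exact: cycle_forest c fT.
  have aE : active G lab T0 = active G lab S by rewrite /active rS.
  split.
    apply/subsetP => e /setDP [eT0 nJ]; rewrite /Jset aE in_setI eT0 andbT in nJ.
    case/rsetP: eT0 => t [h g].
    case: t h g => // h _.
      by case/negP: nJ; apply/activeP; exists TI.
    by have [_ ->] := run_std h.
  apply/subsetP => e eS; rewrite /Eset aE in_setU in_setD.
  have [t h] := M' S e.
  case: t h => h.
  - by case: (e \in T0); rewrite /= ?andbT //; apply/activeP; exists TL.
  - by rewrite (_ : e \in T0) //; apply/rsetP; exists TI.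
  - by have [s1 _] := run_std h; move: (s1 erefl); rewrite /= eS.
  - by rewrite (_ : e \in T0) //; apply/rsetP; exists TSi.
move=> T' [[sT [cT aT]] [h1 h2]].
have sp' : span G (T' :&: ge G).
  rewrite /= setIT; split; [done | by move=> x y _ _; apply: cT | exact: forest_of_acyclic aT].
have rB := runB (U T') (M T') sp'.
rewrite /= setIT in rB.
rewrite -rB /T0; congr rset; symmetry; apply: run_ext => -[e t] h /= st.
have na : e \notin active G lab T'.
  apply/negP => /activeP [t' [h' a]].
  have tt := uniq_fst (U T') h h'; subst t'; by move: st a; case: t {h h'}.
apply/idP/idP => [eT|eS].
  apply: (subsetP h1); by rewrite in_setD /Jset in_setI (negbTE na) eT.
have := subsetP h2 _ eS; rewrite in_setU /Eset in_setD (negbTE na) /=.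
by case: (e \in T').
Qed.
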